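(* Let $\mathbf a\in\mathbb N^{L+1}$ be an architecture with width $W$ and depth $L$, and $R>0$ a parameter bound such that \[\inf_{f\in\mathcal{NN}(\mathbf a,W,L,R)}\|f-\eta\|_{L^\infty(\rho_X)}\le\varepsilon\] for some $\varepsilon\ge0$. Then for any $\lambda\ge0$, any minimizer $\boldsymbol\theta_\lambda$ of the regularized population risk $\mathcal R_{\ell,\lambda}$ over $\mathcal P_{\mathbf a,R}$ satisfies \[\|f(\cdot;\boldsymbol\theta_\lambda)-\eta\|_{L^2(\rho_X)}\le\varepsilon+\sqrt{\tfrac\lambda2P(\mathbf a)R^p}.\]
   Context: Setting: $\mathcal X=[0,1]^d$, $\rho$ a probability distribution on $\mathcal X\times\{-1,1\}$ with $X$-marginal $\rho_X$, $(X,Y)\sim\rho$, $\eta(x)=\mathbb E[Y\mid X=x]$. Networks: $\sigma(t)=\max\{0,t\}$; architecture $\mathbf a=(a_0,\dots,a_L)$, $a_0=d$, $a_L=1$, width $W=\max_la_l$, $P(\mathbf a)=\sum_{l=1}^L(a_la_{l-1}+a_l)$; parametrization $\boldsymbol\theta=((W_l,B_l))_{l=1}^L$, $W_l\in\mathbb R^{a_l\times a_{l-1}}$, $B_l\in\mathbb R^{a_l}$; $|\boldsymbol\theta|_p^p$ is the sum of $p$-th powers of absolute entries; $\mathcal P_{\mathbf a,R}$ is the set of parametrizations with entries in $[-R,R]$. Realization $f(x;\boldsymbol\theta)=\operatorname{clip}_1(T_L\circ\sigma\circ\cdots\circ\sigma\circ T_1(x))$, $T_l(z)=W_lz+B_l$,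 $\operatorname{clip}_1(t)=\max(-1,\min(1,t))$; $\mathcal{NN}(\mathbf a,W,L,R)=\{f(\cdot;\boldsymbol\theta)|_{\mathcal X}:\boldsymbol\theta\in\mathcal P_{\mathbf a,R}\}$. Fix $0<p<\infty$; $\mathcal R_{\ell,\lambda}(\boldsymbol\theta)=\mathbb E[(f(X;\boldsymbol\theta)-Y)^2]+\frac\lambda2|\boldsymbol\theta|_p^p$. *)

(* Defs.v *)
From HB Require Import structures.
From mathcomp Require Import all_boot all_order all_algebra.
From mathcomp Require Import all_classical all_reals all_analysis.
Unset Printing Implicit Defensive.
Import Order.TTheory GRing.Theory Num.Theory.
Import numFieldNormedType.Exports.
Local Open Scope classical_set_scope.
Local Open Scope ring_scope.

(** An architecture is given by the widths [a 0 = d, a 1, ..., a L = 1].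
    A parametrization gives, for each layer index [l] (0-based: the paper's
    layer [l+1]), a weight matrix [W_(l+1) : 'M_(a (l+1), a l)] and a bias
    [B_(l+1) : 'cV_(a (l+1))].  Only layers [l < L] are used. *)
Record param (R : realType) (a : nat -> nat) := Param {
  pW : forall l : nat, 'M[R]_(a l.+1, a l);
  pB : forall l : nat, 'cV[R]_(a l.+1) }.
Arguments pW {R a}.
Arguments pB {R a}.

Section nn.
Context {R : realType}.

Definition relu (t : R) : R := Num.max 0 t.

Definition clip1 (t : R) : R := Num.max (-1) (Num.min 1 t).

Fixpoint pre (a : nat -> nat) (th : param R a) (x : seq R) (l : nat)
  : 'cV[R]_(a l) :=
  match l return 'cV[R]_(a l) with
  | 0 => \col_(i < a 0) nth 0 x i
  | l'.+1 =>
      let z := pre a th x l' in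
      let z' := if l' is 0 then z else map_mx relu z in
      pW th l' *m z' + pB th l'
  end.

(** Realization f(x; theta) = clip_1(T_L o sigma o ... o sigma o T_1 (x)).
    Since a L = 1, the sum below is the single output coordinate. *)
Definition realize (a : nat -> nat) (L : nat) (th : param R a) (x : seq R) : R :=
  clip1 (\sum_(i < a L) pre a th x L i 0).

Definition paramset (a : nat -> nat) (L : nat) (Rb : R) : set (param R a) :=
  [set th | forall l, (l < L)%N ->
     (forall i j, `|pW th l i j| <= Rb) /\ (forall i, `|pB th l i 0| <= Rb)].

Definition pnorm_p (a : nat -> nat) (L : nat) (p : R) (th : param R a) : R :=
  \sum_(l < L) ((\sum_(i < a l.+1) \sum_(j < a l) `|pW th l i j| `^ p)
                 + \sum_(i < a l.+1) `|pB th l i 0| `^ p).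

Definition nparams (a : nat -> nat) (L : nat) : nat :=
  \sum_(l < L) (a l.+1 * a l + a l.+1)%N.

Definition NN (d : nat) (a : nat -> nat) (L : nat) (Rb : R)
  : set (d.-tuple R -> R) :=
  [set f | exists2 th, paramset a L Rb th & f = (fun x : d.-tuple R => realize a L th x)].

Definition reg_risk (d : nat) (rho : probability (d.-tuple R * R)%type R)
  (a : nat -> nat) (L : nat) (p lambda : R) (th : param R a) : \bar R :=
  (\int[rho]_z ((realize a L th z.1 - z.2) ^+ 2)%:E
   + (lambda / 2 * pnorm_p a L p th)%:E)%E.

Definition supported_on_cube_pm1 (d : nat)
  (rho : probability (d.-tuple R * R)%type R) : Prop :=
  {ae rho, forall z : d.-tuple R * R,
     (forall i : 'I_d, 0 <= tnth z.1 i <= 1) /\ (z.2 = 1 \/ z.2 = -1)}.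

Definition marginalX (d : nat) (rho : probability (d.-tuple R * R)%type R)
  : {measure set (d.-tuple R) -> \bar R}.
refine (pushforward rho fst : {measure set _ -> \bar R}).
exact: measurable_fst.
Defined.

(** eta is (a version of) the regression function E[Y | X = x]:
    measurable, rho_X-integrable, and int_{X in B} Y drho = int_B eta drho_X
    for every measurable B. *)
Definition regression_fun (d : nat) (rho : probability (d.-tuple R * R)%type R)
  (eta : d.-tuple R -> R) : Prop :=
  measurable_fun setT eta /\
  (marginalX d rho).-integrable setT (fun x => (eta x)%:E) /\
  forall B : set (d.-tuple R), measurable B ->
    (\int[rho]_(z in B `*` setT) (z.2)%:E
     = \int[marginalX d rho]_(x in B) (eta x)%:E)%E.

End nn.

(* Main.v *)
Require Import Defs.
From HB Require Import structures.
From mathcomp Require Import all_boot all_order all_algebra.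
From mathcomp Require Import all_classical all_reals all_analysis.
From mathcomp Require Import measurable_realfun numfun simple_functions measurable_fun_approximation.
From mathcomp Require Import ess_sup_inf hoelder.
From mathcomp Require Import ring lra.
Import Order.TTheory GRing.Theory Num.Theory.
Import numFieldNormedType.Exports.
Import HBNNSimple.
Local Open Scope classical_set_scope.
Local Open Scope ring_scope.

Section meas.
Context {R : realType} (d : nat).

Lemma meas_relu (f : d.-tuple R -> R) : measurable_fun setT f ->
  measurable_fun setT (fun x => relu (f x)).
Proof. move=> mf; rewrite /relu; exact: measurable_realfun.measurable_maxr. Qed.

Lemma meas_pre a (th : param R a) l (i : 'I_(a l)) :
  measurable_fun [set: d.-tuple R] (fun x : d.-tuple R => pre a th x l i 0).
Proof.
elim: l i => [|l IH] i /=.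
  under eq_fun do rewrite mxE.
  case: (ltnP i d) => hi.
    have -> : (fun x : d.-tuple R => nth 0 (tval x) i) = (fun x => tnth x (Ordinal hi)).
      by apply: funext => x; rewrite (tnth_nth 0).
    exact: measurable_tnth.
  have -> : (fun x : d.-tuple R => nth 0 (tval x) i) = (fun x => 0).
    by apply: funext => x; rewrite nth_default // size_tuple.
  exact: measurable_cst.
under eq_fun do rewrite !mxE.
apply: measurable_realfun.measurable_funD; last exact: measurable_cst.
apply: measurable_sum => j.
apply: measurable_realfun.measurable_funM; first exact: measurable_cst.
move: IH j; case: l i => [|l] i IH j /=; first exact: IH.
under eq_fun do rewrite mxE.
exact: meas_relu.
Qed.

Lemma meas_realize a L (th : param R a) :
  measurable_fun [set: d.-tuple R] (fun x : d.-tuple R => realize a L th x).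
Proof.
rewrite /realize /clip1.
apply: measurable_realfun.measurable_maxr; first exact: measurable_cst.
apply: measurable_realfun.measurable_minr; first exact: measurable_cst.
apply: measurable_sum => i; exact: meas_pre.
Qed.

Lemma clip1_bd (t : R) : `|clip1 t| <= 1.
Proof.
rewrite /clip1 ler_norml le_max lexx /= ge_max ge_min lexx /= andbT.
lra.
Qed.

Lemma realize_bd a L (th : param R a) (x : seq R) : `|realize a L th x| <= 1.
Proof. exact: clip1_bd. Qed.
End meas.

Section dens.
Context d1 d2 (S : measurableType d1) (X : measurableType d2) (R : realType).
Variable m : {measure set S -> \bar R}.
Variable phi : S -> X.
Hypothesis mphi : measurable_fun setT phi.
Local Open Scope ereal_scope.

Lemma dens_simple (g : S -> \bar R) (g0 : forall s, 0 <= g s)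
  (mg : measurable_fun setT g) (f : {nnsfun X >-> R}) :
  \int[m]_s ((f (phi s))%:E * g s) =
  \sum_(y \in range f) (y%:E * \int[m]_(s in phi @^-1` (f @^-1` [set y])) g s).
Proof.
have ind0 y z : (0 <= (y * \1_(f @^-1` [set y]) z)%:E).
  rewrite lee_fin indicE; case: (boolP (z \in _)) => /= hz; last by rewrite mulr0.
  rewrite mulr1; move: hz; rewrite inE /= => <-; exact: fun_ge0.
have mind y : measurable_fun setT (fun s => (y * \1_(f @^-1` [set y]) (phi s))%:E).
  apply/measurable_EFinP; apply: measurable_funM; first exact: measurable_cst.
  apply: measurableT_comp mphi; apply: measurable_indic.
  exact: measurable_funPTI.
transitivity (\int[m]_s (\sum_(y \in range f)
    ((y * \1_(f @^-1` [set y]) (phi s))%:E * g s))).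
  apply: eq_integral => s _.
  rewrite [in LHS]fimfunE -fsumEFin //; rewrite ge0_mule_fsuml //.
rewrite ge0_integral_fsum //; last 2 first.
  - by move=> y; apply: emeasurable_funM => //.
  - by move=> y s _; apply: mule_ge0.
apply: eq_fsbigr => y yr.
under eq_integral do rewrite EFinM -muleA.
have y0 : (0 <= y%:E). 
  by move: yr; rewrite inE => -[x _ <-]; rewrite lee_fin; exact: fun_ge0.
rewrite ge0_integralZl //; last 2 first.
  - apply: emeasurable_funM => //.
    apply/measurable_EFinP; apply: measurableT_comp mphi; apply: measurable_indic.
    exact: measurable_funPTI.
  - by move=> s _; apply: mule_ge0 => //; rewrite lee_fin indicE.
congr (_ * _).
rewrite [RHS]integral_mkcond; apply: eq_integral => s _.
rewrite patchE indicE.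
case: (boolP (s \in phi @^-1` (f @^-1` [set y]))) => hs.
  by rewrite (_ : (phi s \in _) = true) // mul1e.
by rewrite (_ : (phi s \in _) = false) ?mul0e //; apply/negbTE.
Qed.

Lemma dens_lim (g : S -> \bar R) (g0 : forall s, 0 <= g s)
  (mg : measurable_fun setT g) (fg : forall s, g s \is a fin_num)
  (h : X -> R) (mh : measurable_fun setT h) (h0 : forall x, (0 <= h x)%R)
  (mEh : measurable_fun setT (EFin \o h)) :
  \int[m]_s ((h (phi s))%:E * g s) =
  limn (fun n => \int[m]_s ((nnsfun_approx measurableT mEh n (phi s))%:E * g s)).
Proof.
rewrite -monotone_convergence //.
- apply: eq_integral => s _; apply/esym/cvg_lim => //; apply: cvgeZr => //.
  apply: (@cvg_nnsfun_approx _ _ _ setT measurableT (EFin \o h) mEh) => //.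
  by move=> x _; rewrite lee_fin.
- move=> n; apply: emeasurable_funM => //; apply/measurable_EFinP.
  apply: measurableT_comp mphi; exact: measurable_funPT.
- by move=> n s _; apply: mule_ge0 => //; rewrite lee_fin; exact: fun_ge0.
- move=> s _ a b ab /=; rewrite lee_wpmul2r ?lee_fin //.
  exact/lefP/nd_nnsfun_approx.
Qed.

Lemma dens_eq (g1 g2 : S -> \bar R) (g10 : forall s, 0 <= g1 s)
  (g20 : forall s, 0 <= g2 s)
  (mg1 : measurable_fun setT g1) (mg2 : measurable_fun setT g2)
  (fg1 : forall s, g1 s \is a fin_num) (fg2 : forall s, g2 s \is a fin_num)
  (hg : forall B, measurable B ->
     \int[m]_(s in phi @^-1` B) g1 s = \int[m]_(s in phi @^-1` B) g2 s)
  (h : X -> R) (mh : measurable_fun setT h) (h0 : forall x, (0 <= h x)%R) :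
  \int[m]_s ((h (phi s))%:E * g1 s) = \int[m]_s ((h (phi s))%:E * g2 s).
Proof.
have mEh : measurable_fun setT (EFin \o h) by exact/measurable_EFinP.
rewrite (dens_lim _ g10 mg1 fg1 _ mh h0 mEh) (dens_lim _ g20 mg2 fg2 _ mh h0 mEh).
congr (lim (_ @ \oo)); apply: funext => n.
by rewrite !dens_simple //; apply: eq_fsbigr => y _; rewrite hg.
Qed.
End dens.

Section ib.
Context d (T : measurableType d) (R : realType) (mu : {finite_measure set T -> \bar R}).
Local Open Scope ereal_scope.

Lemma IB (k : T -> R) (c : R) : measurable_fun setT k ->
  {ae mu, forall x, (`|k x| <= c)%R} -> mu.-integrable setT (EFin \o k).
Proof.
move=> mk hk; apply/integrableP; split; first exact/measurable_EFinP.
apply: (@le_lt_trans _ _ (\int[mu]_x (cst `|c|%:E) x)).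
  apply: ae_ge0_le_integral => //.
  - apply: measurableT_comp => //; exact/measurable_EFinP.
  - by move=> x _; rewrite lee_fin.
  - apply: filterS hk => x hx _ /=; rewrite lee_fin; exact: le_trans hx (ler_norm c).
by rewrite integral_cst // ltey_eq fin_numM // fin_num_measure.
Qed.
End ib.

Lemma ae_fst (R : realType) (d : nat) (rho : probability (d.-tuple R * R)%type R)
  (P : d.-tuple R -> Prop) :
  {ae marginalX d rho, forall x, P x} -> {ae rho, forall z, P z.1}.
Proof.
move=> [N [mN N0 sub]]; exists (fst @^-1` N); split => //.
- rewrite -[X in measurable X]setTI; exact: measurable_fst.
- move=> z /= hz; apply: sub; exact: hz.
Qed.

Lemma maxdec {R : realType} (x : R) : x = Num.max x 0 - Num.max (- x) 0.
Proof.
have [hx|hx] := leP 0 x.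
  rewrite (_ : Num.max (- x) 0 = 0) ?subr0 //; apply/max_idPr; by rewrite oppr_le0.
rewrite (_ : Num.max (- x) 0 = - x) ?sub0r ?opprK //; apply/max_idPl.
by rewrite oppr_ge0 ltW.
Qed.

Section core.
Context (R : realType) (d : nat) (rho : probability (d.-tuple R * R)%type R).
Local Notation Z := (d.-tuple R * R)%type.

Definition BM (k : Z -> R) :=
  measurable_fun setT k /\ exists c, {ae rho, forall z, `|k z| <= c}.

Lemma BM_cst c : BM (fun _ => c).
Proof.
split; first exact: measurable_cst.
by exists `|c|; apply: aeW => z.
Qed.

Lemma BM_add f g : BM f -> BM g -> BM (fun z => f z + g z).
Proof.
move=> [mf [cf af]] [mg [cg ag]]; split; first exact: measurable_funD.
exists (cf + cg); apply: filterS2 af ag => z hf hg.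
exact: le_trans (ler_normD _ _) (lerD hf hg).
Qed.

Lemma BM_opp f : BM f -> BM (fun z => - f z).
Proof.
move=> [mf [cf af]]; split; first exact: measurableT_comp.
by exists cf; apply: filterS af => z; rewrite normrN.
Qed.

Lemma BM_sub f g : BM f -> BM g -> BM (fun z => f z - g z).
Proof. by move=> hf hg; apply: BM_add => //; exact: BM_opp. Qed.

Lemma BM_mul f g : BM f -> BM g -> BM (fun z => f z * g z).
Proof.
move=> [mf [cf af]] [mg [cg ag]]; split; first exact: measurable_funM.
exists (cf * cg); apply: filterS2 af ag => z hf hg.
by rewrite normrM; apply: ler_pM.
Qed.

Lemma BM_sq f : BM f -> BM (fun z => f z ^+ 2).
Proof. by move=> hf; under eq_fun do rewrite expr2; exact: BM_mul. Qed.

Lemma BM_max f g : BM f -> BM g -> BM (fun z => Num.max (f z) (g z)).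
Proof.
move=> [mf [cf af]] [mg [cg ag]]; split; first exact: measurable_maxr.
exists (cf + cg); apply: filterS2 af ag => z hf hg.
have h1 := normr_ge0 (f z); have h2 := normr_ge0 (g z).
case: (leP (f z) (g z)) => _.
  by apply: le_trans hg _; rewrite lerDr; exact: le_trans h1 hf.
by apply: le_trans hf _; rewrite lerDl; exact: le_trans h2 hg.
Qed.

Lemma BM_fst {h : d.-tuple R -> R} {c} : measurable_fun setT h ->
  (forall x, `|h x| <= c) -> BM (fun z => h z.1).
Proof.
move=> mh hb; split; first exact: measurableT_comp.
by exists c; apply: aeW => z.
Qed.

Lemma BM_int {k} : BM k -> rho.-integrable setT (EFin \o k).
Proof. by move=> [mk [c ak]]; exact: IB ak. Qed.

Lemma BM_intS {D k} : measurable D -> BM k -> rho.-integrable D (EFin \o k).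
Proof. by move=> mD hk; exact: (integrableS measurableT mD (@subsetT _ _) (BM_int hk)). Qed.


Variable eta : d.-tuple R -> R.
Hypothesis hreg : regression_fun d rho eta.
Variable cn : R.
Hypothesis an : {ae rho, forall z, `|eta z.1| <= cn}.
Hypothesis ay : {ae rho, forall z, `|z.2| <= 1}.

Lemma BM_y : BM (fun z => z.2).
Proof. split; [exact: measurable_snd | by exists 1]. Qed.

Lemma meta : measurable_fun setT eta.
Proof. by case: hreg. Qed.

Lemma BM_n : BM (fun z => eta z.1).
Proof. split; [exact: measurableT_comp meta measurable_fst | by exists cn]. Qed.

Lemma setXT_fst (B : set (d.-tuple R)) : B `*` setT = fst @^-1` B :> set Z.
Proof. by apply/seteqP; split => [z [] //|z Bz]; split. Qed.

Lemma step1a {B} : measurable B ->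
  Rintegral rho (fst @^-1` B) (fun z => z.2) =
  Rintegral rho (fst @^-1` B) (fun z => eta z.1).
Proof.
move=> mB; have [_ [_ hB]] := hreg.
have := hB B mB; rewrite setXT_fst /marginalX.
rewrite integral_pushforward //.
- by move=> h; rewrite /Rintegral; exact: (congr1 fine h).
- by apply: measurableT_comp => //; exact: meta.
- apply: (BM_intS _ BM_n); rewrite -[X in measurable X]setTI; exact: measurable_fst.
Qed.

Lemma RI_E {D f} : measurable D -> BM f ->
  (\int[rho]_(z in D) (f z)%:E)%E = (Rintegral rho D f)%:E.
Proof.
by move=> mD bf; rewrite /Rintegral fineK // integrable_fin_num // (BM_intS mD bf).
Qed.

Lemma RI_add {D f g h} : measurable D -> BM g -> BM h ->
  (forall z, f z = g z + h z) ->
  Rintegral rho D f = Rintegral rho D g + Rintegral rho D h.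
Proof.
move=> mD bg bh e; rewrite (@eq_Rintegral _ _ _ _ _ (fun z => g z + h z)).
  by rewrite RintegralD //; exact: BM_intS.
by move=> z _; rewrite e.
Qed.

Lemma RI_sub {D f g h} : measurable D -> BM g -> BM h ->
  (forall z, f z = g z - h z) ->
  Rintegral rho D f = Rintegral rho D g - Rintegral rho D h.
Proof.
move=> mD bg bh e; rewrite (@eq_Rintegral _ _ _ _ _ (fun z => g z - h z)).
  by rewrite RintegralB //; exact: BM_intS.
by move=> z _; rewrite e.
Qed.

Lemma RI_scale {D f g} c : measurable D -> BM g ->
  (forall z, f z = c * g z) ->
  Rintegral rho D f = c * Rintegral rho D g.
Proof.
move=> mD bg e; rewrite (@eq_Rintegral _ _ _ _ _ (fun z => c * g z)).
  by rewrite RintegralZl //; exact: BM_intS.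
by move=> z _; rewrite e.
Qed.

Ltac bm := repeat (first [ assumption | exact: BM_y | exact: BM_n | exact: BM_cst
  | apply: BM_add | apply: BM_sub | apply: BM_mul | apply: BM_opp
  | apply: BM_max | apply: BM_sq ]).

Lemma Kcond (h : d.-tuple R -> R) (c : R) : measurable_fun setT h ->
  (forall x, `|h x| <= c) ->
  Rintegral rho setT (fun z => h z.1 * z.2) =
  Rintegral rho setT (fun z => h z.1 * eta z.1).
Proof.
move=> mh hc.
have bh : BM (fun z => h z.1) by exact: (BM_fst mh hc).
pose g1 := fun z : Z => Num.max z.2 0 + Num.max (- eta z.1) 0.
pose g2 := fun z : Z => Num.max (- z.2) 0 + Num.max (eta z.1) 0.
have bg1 : BM g1 by rewrite /g1; bm.
have bg2 : BM g2 by rewrite /g2; bm.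
have s1 B : measurable B ->
    (\int[rho]_(z in fst @^-1` B) (g1 z)%:E = \int[rho]_(z in fst @^-1` B) (g2 z)%:E)%E.
  move=> mB.
  have mD : measurable (fst @^-1` B :> set Z).
    rewrite -[X in measurable X]setTI; exact: measurable_fst.
  rewrite (RI_E mD bg1) (RI_E mD bg2); congr EFin.
  have e0 := step1a mB.
  have e1 := @RI_sub _ (fun z => z.2) (fun z => Num.max z.2 0)
    (fun z => Num.max (- z.2) 0) mD ltac:(bm) ltac:(bm) (fun z => maxdec z.2).
  have e2 := @RI_sub _ (fun z => eta z.1) (fun z => Num.max (eta z.1) 0)
    (fun z => Num.max (- eta z.1) 0) mD ltac:(bm) ltac:(bm) (fun z => maxdec (eta z.1)).
  have e3 := @RI_add _ g1 (fun z => Num.max z.2 0)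
    (fun z => Num.max (- eta z.1) 0) mD ltac:(bm) ltac:(bm) (fun z => erefl).
  have e4 := @RI_add _ g2 (fun z => Num.max (- z.2) 0)
    (fun z => Num.max (eta z.1) 0) mD ltac:(bm) ltac:(bm) (fun z => erefl).
  lra.
pose h' := fun x => h x + c.
have h'0 x : 0 <= h' x.
  by rewrite /h'; have := hc x; rewrite ler_norml => /andP[+ _]; lra.
have mh' : measurable_fun setT h'.
  by apply: measurable_funD => //; exact: measurable_cst.
have bh' : BM (fun z => h' z.1) by rewrite /h'; bm.
have de := @dens_eq _ _ _ _ _ rho fst measurable_fst (EFin \o g1) (EFin \o g2).
have {}de := de ltac:(by move=> z; rewrite lee_fin /g1 addr_ge0 // le_max lexx orbT)
  ltac:(by move=> z; rewrite lee_fin /g2 addr_ge0 // le_max lexx orbT)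
  ltac:(by apply/measurable_EFinP; case: bg1)
  ltac:(by apply/measurable_EFinP; case: bg2)
  ltac:(by []) ltac:(by []) s1 h' mh' h'0.
have de' : Rintegral rho setT (fun z => h' z.1 * g1 z) =
           Rintegral rho setT (fun z => h' z.1 * g2 z).
  rewrite /Rintegral; congr fine.
  under eq_integral do rewrite EFinM.
  under [RHS]eq_integral do rewrite EFinM.
  exact: de.
have ey := @step1a setT measurableT; rewrite preimage_setT in ey.
have ea := @RI_sub setT (fun z => h z.1 * z.2)
  (fun z => h' z.1 * g1 z - h' z.1 * g2 z + h z.1 * eta z.1 + c * eta z.1)
  (fun z => c * z.2) measurableT ltac:(bm) ltac:(bm)
  ltac:(move=> z; rewrite /h' /g1 /g2; move: (maxdec z.2) (maxdec (eta z.1));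
        set p := Num.max z.2 0; set q := Num.max (- z.2) 0;
        set r := Num.max (eta z.1) 0; set t := Num.max (- eta z.1) 0;
        move=> E1 E2; rewrite E1 E2; ring).
have eb := @RI_add setT
  (fun z => h' z.1 * g1 z - h' z.1 * g2 z + h z.1 * eta z.1 + c * eta z.1)
  (fun z => h' z.1 * g1 z - h' z.1 * g2 z + h z.1 * eta z.1)
  (fun z => c * eta z.1) measurableT ltac:(bm) ltac:(bm) (fun z => erefl).
have ec := @RI_add setT
  (fun z => h' z.1 * g1 z - h' z.1 * g2 z + h z.1 * eta z.1)
  (fun z => h' z.1 * g1 z - h' z.1 * g2 z)
  (fun z => h z.1 * eta z.1) measurableT ltac:(bm) ltac:(bm) (fun z => erefl).
have ed := @RI_sub setT (fun z => h' z.1 * g1 z - h' z.1 * g2 z)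
  (fun z => h' z.1 * g1 z) (fun z => h' z.1 * g2 z)
  measurableT ltac:(bm) ltac:(bm) (fun z => erefl).
have ee := @RI_scale setT (fun z => c * eta z.1) (fun z => eta z.1) c
  measurableT ltac:(bm) (fun z => erefl).
have ef := @RI_scale setT (fun z => c * z.2) (fun z => z.2) c
  measurableT ltac:(bm) (fun z => erefl).
rewrite ea eb ec ed ee ef de' ey; ring.
Qed.

Lemma core_id (F G : d.-tuple R -> R) : measurable_fun setT F -> measurable_fun setT G ->
  (forall x, `|F x| <= 1) -> (forall x, `|G x| <= 1) ->
  Rintegral rho setT (fun z => (F z.1 - z.2) ^+ 2) -
  Rintegral rho setT (fun z => (G z.1 - z.2) ^+ 2) =
  Rintegral rho setT (fun z => (F z.1 - eta z.1) ^+ 2) -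
  Rintegral rho setT (fun z => (G z.1 - eta z.1) ^+ 2).
Proof.
move=> mF mG bF bG.
have bf : BM (fun z => F z.1) by exact: (BM_fst mF bF).
have bg : BM (fun z => G z.1) by exact: (BM_fst mG bG).
have mFG : measurable_fun setT (fun x => F x - G x) by exact: measurable_funB.
have bFG x : `|F x - G x| <= 2.
  by apply: le_trans (ler_normB _ _) _; have := bF x; have := bG x; lra.
have K := @Kcond (fun x => F x - G x) 2 mFG bFG.
have e1 := @RI_sub setT (fun z => (F z.1 - z.2) ^+ 2)
  (fun z => (G z.1 - z.2) ^+ 2 + (F z.1 - G z.1) * (F z.1 + G z.1))
  (fun z => 2 * ((F z.1 - G z.1) * z.2)) measurableT ltac:(bm) ltac:(bm)
  ltac:(by move=> z /=; ring).
have e2 := @RI_add setT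
  (fun z => (G z.1 - z.2) ^+ 2 + (F z.1 - G z.1) * (F z.1 + G z.1))
  (fun z => (G z.1 - z.2) ^+ 2) (fun z => (F z.1 - G z.1) * (F z.1 + G z.1))
  measurableT ltac:(bm) ltac:(bm) (fun z => erefl).
have e3 := @RI_scale setT (fun z => 2 * ((F z.1 - G z.1) * z.2))
  (fun z => (F z.1 - G z.1) * z.2) 2 measurableT ltac:(bm) (fun z => erefl).
have f1 := @RI_sub setT (fun z => (F z.1 - eta z.1) ^+ 2)
  (fun z => (G z.1 - eta z.1) ^+ 2 + (F z.1 - G z.1) * (F z.1 + G z.1))
  (fun z => 2 * ((F z.1 - G z.1) * eta z.1)) measurableT ltac:(bm) ltac:(bm)
  ltac:(by move=> z /=; ring).
have f2 := @RI_add setT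
  (fun z => (G z.1 - eta z.1) ^+ 2 + (F z.1 - G z.1) * (F z.1 + G z.1))
  (fun z => (G z.1 - eta z.1) ^+ 2) (fun z => (F z.1 - G z.1) * (F z.1 + G z.1))
  measurableT ltac:(bm) ltac:(bm) (fun z => erefl).
have f3 := @RI_scale setT (fun z => 2 * ((F z.1 - G z.1) * eta z.1))
  (fun z => (F z.1 - G z.1) * eta z.1) 2 measurableT ltac:(bm) (fun z => erefl).
rewrite e1 e2 e3 f1 f2 f3 K; ring.
Qed.
End core.

Lemma lim_arg {R : realType} (U eps c : R) : 0 <= eps ->
  (forall del, 0 < del -> U <= (eps + del) ^+ 2 + c) -> U <= eps ^+ 2 + c.
Proof.
move=> e0 H; apply/ler_addgt0Pr => e he.
pose del := Num.min 1 (e / (2 * eps + 1)).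
have h21 : 0 < 2 * eps + 1 by lra.
have d0 : 0 < del by rewrite lt_min ltr01 divr_gt0.
have d1 : del <= 1 by rewrite ge_min lexx.
have d2 : del * (2 * eps + 1) <= e.
  rewrite -ler_pdivlMr //; by rewrite ge_min lexx orbT.
have := H del d0; nra.
Qed.

Lemma pnorm_ge0 {R : realType} a L (p : R) (th : param R a) : 0 <= pnorm_p a L p th.
Proof.
apply: sumr_ge0 => l _; apply: addr_ge0; apply: sumr_ge0 => i _;
  [apply: sumr_ge0 => j _|]; exact: powR_ge0.
Qed.


Lemma pnorm_le {R : realType} a L (p Rb : R) (th : param R a) : 0 <= p -> 0 <= Rb ->
  th \in paramset a L Rb -> pnorm_p a L p th <= (nparams a L)%:R * Rb `^ p.
Proof.
move=> p0 Rb0; rewrite inE => hth.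
rewrite /pnorm_p /nparams natr_sum mulr_suml; apply: ler_sum => l _.
have [hW hB] := hth l (ltn_ord l).
rewrite natrD natrM mulrDl; apply: lerD.
  apply: le_trans (_ : _ <= \sum_(i < a l.+1) \sum_(j < a l) Rb `^ p) _.
    apply: ler_sum => i _; apply: ler_sum => j _; apply: (ge0_ler_powR p0); rewrite ?nnegrE ?normr_ge0 //.
  under eq_bigr do rewrite sumr_const card_ord.
  by rewrite sumr_const card_ord -natrM mulr_natl -mulrnA mulnC.
apply: le_trans (_ : _ <= \sum_(i < a l.+1) Rb `^ p) _.
  by apply: ler_sum => i _; apply: (ge0_ler_powR p0); rewrite ?nnegrE ?normr_ge0.
by rewrite sumr_const card_ord mulr_natl.
Qed.


Lemma sqrt_bound {R : realType} (eps c : R) : 0 <= eps -> 0 <= c ->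
  Num.sqrt (eps ^+ 2 + c) <= eps + Num.sqrt c.
Proof.
move=> e0 c0.
have s0 := sqrtr_ge0 c.
rewrite -(ger0_norm (addr_ge0 e0 s0)) -sqrtr_sqr ler_sqrt; last by rewrite sqr_ge0.
rewrite sqrrD sqr_sqrtr // lerD2r lerDl; apply: mulrn_wge0; exact: mulr_ge0.
Qed.

Ltac bm' := repeat (first [ assumption | exact: BM_cst
  | apply: BM_add | apply: BM_sub | apply: BM_mul | apply: BM_opp
  | apply: BM_max | apply: BM_sq ]).


Theorem lemma9 (R : realType) (d : nat)
  (rho : probability (d.-tuple R * R)%type R) (eta : d.-tuple R -> R)
  (p : R) (a : nat -> nat) (L : nat) (Rb eps lambda : R)
  (thl : param R a) :
  supported_on_cube_pm1 d rho ->
  regression_fun d rho eta ->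
  0 < p ->
  (0 < L)%N -> a 0%N = d -> a L = 1%N ->
  0 < Rb ->
  0 <= eps ->
  (ereal_inf [set Lnorm (marginalX d rho) +oo%E (fun x => (f x - eta x)%:E)
               | f in NN d a L Rb] <= eps%:E)%E ->
  0 <= lambda ->
  thl \in paramset a L Rb ->
  (forall th, th \in paramset a L Rb ->
     (reg_risk d rho a L p lambda thl <= reg_risk d rho a L p lambda th)%E) ->
  (Lnorm (marginalX d rho) 2%:E (fun x => (realize a L thl x - eta x)%:E)
    <= (eps + Num.sqrt (lambda / 2 * (nparams a L)%:R * Rb `^ p))%:E)%E.
Proof.
move=> hsupp hreg p0 L0 a0 aL Rb0 eps0 hinf lam0 thl_in hmin.
set c := lambda / 2 * (nparams a L)%:R * Rb `^ p.
have c0 : 0 <= c.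
  rewrite /c; apply: mulr_ge0; last exact: powR_ge0.
  by apply: mulr_ge0 => //; apply: divr_ge0.
pose F := fun x : d.-tuple R => realize a L thl x.
have mF : measurable_fun setT F by exact: meas_realize.
have bF x : `|F x| <= 1 by exact: realize_bd.
have ay : {ae rho, forall z, `|z.2| <= 1}.
  by apply: filterS hsupp => z [_ [->|->]]; rewrite ?normrN normr1.
have mu0 : (0 < marginalX d rho setT)%E.
  by rewrite /marginalX /= /pushforward preimage_setT probability_setT lte01.
pose U := Rintegral rho setT (fun z => (F z.1 - eta z.1) ^+ 2).
have key : forall del, 0 < del -> U <= (eps + del) ^+ 2 + c.
  move=> del del0.
  have hlt : (ereal_inf [set Lnorm (marginalX d rho) +oo%E (fun x => (f x - eta x)%:E)
               | f in NN d a L Rb] < (eps + del)%:E)%E.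
    by apply: le_lt_trans hinf _; rewrite lte_fin ltrDl.
  have [y [f [th thP ->{f}] <-{y}] hy] := ereal_inf_lt hlt.
  pose G := fun x : d.-tuple R => realize a L th x.
  have mG : measurable_fun setT G by exact: meas_realize.
  have bG x : `|G x| <= 1 by exact: realize_bd.
  set e := eps + del.
  have aG : {ae marginalX d rho, forall x, `|G x - eta x| <= e}.
    move: hy; rewrite unlock mu0 => /ltW /ess_supP.
    by apply: filterS => x /=; rewrite lee_fin.
  have aGr := @ae_fst R d rho _ aG.
  have an : {ae rho, forall z, `|eta z.1| <= 1 + e}.
    apply: filterS aGr => z hz; have := bG z.1.
    rewrite (_ : eta z.1 = G z.1 - (G z.1 - eta z.1)); last by ring.
    move=> h1; apply: le_trans (ler_normB _ _) _; lra.
  have hid := @core_id R d rho eta hreg (1 + e) an ay F G mF mG bF bG.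
  have bY : BM R d rho (fun z => z.2) := @BM_y R d rho ay.
  have bN : BM R d rho (fun z => eta z.1) := @BM_n R d rho eta hreg (1 + e) an.
  have bf : BM R d rho (fun z => realize a L thl z.1) := @BM_fst R d rho F 1 mF bF.
  have bg : BM R d rho (fun z => realize a L th z.1) := @BM_fst R d rho G 1 mG bG.
  have bV : BM R d rho (fun z => (realize a L th z.1 - eta z.1) ^+ 2) by bm'.
  have hV : Rintegral rho setT (fun z => (realize a L th z.1 - eta z.1) ^+ 2) <= e ^+ 2.
    rewrite -lee_fin -(@RI_E R d rho setT (fun z => (realize a L th z.1 - eta z.1) ^+ 2)
      measurableT ltac:(bm')).
    apply: (@le_trans _ _ (\int[rho]_z (cst (e ^+ 2)%:E) z)%E).
      apply: (ae_ge0_le_integral measurableT).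
      - by move=> z _; rewrite lee_fin sqr_ge0.
      - by apply/measurable_EFinP; case: bV.
      - by move=> z _; rewrite lee_fin sqr_ge0.
      - exact: measurable_cst.
      - apply: filterS aGr => z hz _; rewrite lee_fin /=.
        rewrite -(real_normK (num_real (realize a L th z.1 - eta z.1))).
        have h0 := normr_ge0 (realize a L th z.1 - eta z.1).
        have hz' : `|realize a L th z.1 - eta z.1| <= e by exact: hz.
        nra.
    have r1 : rho setT = 1%E by exact: probability_setT.
    rewrite integral_cst //; change ((e ^+ 2)%:E * rho setT <= (e ^+ 2)%:E)%E.
    by rewrite r1 mule1.
  have thin : th \in paramset a L Rb by rewrite inE.
  have hm := hmin th thin.
  rewrite /reg_risk in hm.
  rewrite (@RI_E R d rho setT (fun z => (realize a L thl z.1 - z.2) ^+ 2)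
      measurableT ltac:(bm')) in hm.
  rewrite (@RI_E R d rho setT (fun z => (realize a L th z.1 - z.2) ^+ 2)
      measurableT ltac:(bm')) in hm.
  rewrite -!EFinD lee_fin in hm.
  have pF0 := pnorm_ge0 a L p thl.
  have pG := @pnorm_le R a L p Rb th (ltW p0) (ltW Rb0) thin.
  have h1 : lambda / 2 * pnorm_p a L p th <= c.
    rewrite /c -[X in _ <= X]mulrA; apply: ler_wpM2l => //; exact: divr_ge0.
  have h2 : 0 <= lambda / 2 * pnorm_p a L p thl.
    by apply: mulr_ge0 => //; apply: divr_ge0.
  have hid' : Rintegral rho setT (fun z => (realize a L thl z.1 - z.2) ^+ 2) -
    Rintegral rho setT (fun z => (realize a L th z.1 - z.2) ^+ 2) =
    U - Rintegral rho setT (fun z => (realize a L th z.1 - eta z.1) ^+ 2) := hid.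
  move: hm h1 h2 hid' hV.
  set A := Rintegral rho setT (fun z => (realize a L thl z.1 - z.2) ^+ 2).
  set B := Rintegral rho setT (fun z => (realize a L th z.1 - z.2) ^+ 2).
  set V := Rintegral rho setT (fun z => (realize a L th z.1 - eta z.1) ^+ 2).
  set P1 := lambda / 2 * pnorm_p a L p thl.
  set P2 := lambda / 2 * pnorm_p a L p th.
  move=> *; lra.
have hU : U <= eps ^+ 2 + c := lim_arg U eps c eps0 key.
have bY : BM R d rho (fun z => z.2) := @BM_y R d rho ay.
have bf : BM R d rho (fun z => realize a L thl z.1) := @BM_fst R d rho F 1 mF bF.
have U0 : 0 <= U by apply: Rintegral_ge0 => z _; exact: sqr_ge0.
rewrite unlock /=.
have [cn an0] : exists cn, {ae rho, forall z, `|eta z.1| <= cn}.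
  have hlt : (ereal_inf [set Lnorm (marginalX d rho) +oo%E (fun x => (f x - eta x)%:E)
               | f in NN d a L Rb] < (eps + 1)%:E)%E.
    by apply: le_lt_trans hinf _; rewrite lte_fin ltrDl.
  have [y [f [th thP ->{f}] <-{y}] hy] := ereal_inf_lt hlt.
  pose G := fun x : d.-tuple R => realize a L th x.
  have bG x : `|G x| <= 1 by exact: realize_bd.
  have aG : {ae marginalX d rho, forall x, `|G x - eta x| <= eps + 1}.
    move: hy; rewrite unlock mu0 => /ltW /ess_supP.
    by apply: filterS => x /=; rewrite lee_fin.
  have aGr := @ae_fst R d rho _ aG.
  exists (1 + (eps + 1)).
  apply: filterS aGr => z hz; have := bG z.1.
  rewrite (_ : eta z.1 = G z.1 - (G z.1 - eta z.1)); last by ring.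
  move=> h1; apply: le_trans (ler_normB _ _) _; lra.
have bN : BM R d rho (fun z => eta z.1) := @BM_n R d rho eta hreg cn an0.
have bU : BM R d rho (fun z => (F z.1 - eta z.1) ^+ 2) by bm'.
have -> : (\int[pushforward rho fst]_x (`|realize a L thl x - eta x| `^ 2)%:E)%E = U%:E.
  under eq_integral do rewrite powR_mulrn ?normr_ge0 // real_normK ?num_real //.
  rewrite ge0_integral_pushforward //.
  - by rewrite preimage_setT -(@RI_E R d rho setT _ measurableT bU); apply: eq_integral.
  - apply: measurableT_comp => //; apply: measurable_funX.
    apply: measurable_funB; first exact: mF.
    exact: (@meta R d rho eta hreg).
  - by move=> y _; rewrite lee_fin sqr_ge0.
rewrite poweR_EFin lee_fin powR12_sqrt //.
apply: le_trans _ (sqrt_bound eps c eps0 c0); rewrite ler_sqrt //.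
by rewrite addr_ge0 // sqr_ge0.
Qed.
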